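(* Under the hypotheses and notation of the following setting: $M_1,M_2$ are commuting $2$-qubit Hermitian unitaries whose joint $+1$ eigenspace is spanned by the unit vector $\ket\psi$; $M_0=I\otimes I$, $M_3=M_1M_2$; $M_j=I\otimes N_{j0}+X\otimes N_{j1}+Y\otimes N_{j2}+Z\otimes N_{j3}$; $c_j=\tfrac12\operatorname{tr}(N_{j3})$; $p_\pm=\frac{1\pm(c_1+c_2+c_3)}{2}$. For a $2\times 2$ matrix $A$ let $A^\circ=A-\tfrac12\operatorname{tr}(A)I$ denote its traceless part, and define $$M_+=\frac{1}{2p_+}\sum_{j=1}^3\big(N_{j0}+N_{j3}\big)^\circ\ (\text{if }p_+>0),\qquad M_-=\frac{1}{2p_-}\sum_{j=1}^3\big(N_{j0}-N_{j3}\big)^\circ\ (\text{if }p_->0).$$ Then if the first qubit of $\ket\psi$ is measured in the computational basis and outcome $+1$ occurs, the post-measurement state is $\ket0\otimes\ket{\phi_+}$ with $\ket{\phi_+}\bra{\phi_+}=\tfrac12(I+M_+)$; if outcome $-1$ occurs, the post-measurement state is $\ket1\otimes\ket{\phi_-}$ with $\ket{\phi_-}\bra{\phi_-}=\tfrac12(I+M_-)$. In particular $M_\pm$ are Hermitian unitaries having $\ket{\phi_\pm}$ as $+1$ eigenvector.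
   Context: $X,Y,Z$ are the Pauli matrices. The post-measurement state for outcome $+1$ is $(\ket0\bra0\otimes I)\ket\psi/\sqrt{p_+}$ and for outcome $-1$ is $(\ket1\bra1\otimes I)\ket\psi/\sqrt{p_-}$. *)

(* Defs.v *)
From HB Require Import structures.
From mathcomp Require Import all_boot all_order all_algebra.
From mathcomp Require Import mxtens.
Set Implicit Arguments. Unset Strict Implicit. Unset Printing Implicit Defensive.
Import Order.TTheory GRing.Theory Num.Theory.
Local Open Scope ring_scope.

Section Defs.
Variable C : numClosedFieldType.

Definition adj m n (A : 'M[C]_(m, n)) : 'M[C]_(n, m) := (map_mx Num.conj A)^T.

Definition qhermitian n (A : 'M[C]_n) : Prop := adj A = A.
Definition qunitary n (A : 'M[C]_n) : Prop := A *m adj A = 1%:M /\ adj A *m A = 1%:M.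

Definition pauliX : 'M[C]_2 := \matrix_(i < 2, j < 2)
  (if (i == 0 :> nat) && (j == 1 :> nat) then 1
   else if (i == 1 :> nat) && (j == 0 :> nat) then 1 else 0).
Definition pauliY : 'M[C]_2 := \matrix_(i < 2, j < 2)
  (if (i == 0 :> nat) && (j == 1 :> nat) then - 'i
   else if (i == 1 :> nat) && (j == 0 :> nat) then 'i else 0).
Definition pauliZ : 'M[C]_2 := \matrix_(i < 2, j < 2)
  (if (i == 0 :> nat) && (j == 0 :> nat) then 1
   else if (i == 1 :> nat) && (j == 1 :> nat) then -1 else 0).

Definition pauli_expand (N : nat -> 'M[C]_2) : 'M[C]_(2 * 2) :=
  (1%:M : 'M[C]_2) *t N 0%N + pauliX *t N 1%N + pauliY *t N 2%N + pauliZ *t N 3%N.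

Definition traceless (A : 'M[C]_2) : 'M[C]_2 := A - (\tr A / 2) *: 1%:M.

Definition ket0 : 'cV[C]_2 := delta_mx 0 0.
Definition ket1 : 'cV[C]_2 := delta_mx 1 0.

Definition proj0 : 'M[C]_(2 * 2) := (ket0 *m adj ket0) *t (1%:M : 'M[C]_2).
Definition proj1 : 'M[C]_(2 * 2) := (ket1 *m adj ket1) *t (1%:M : 'M[C]_2).
End Defs.

(* Main.v *)
Require Import Defs.
From HB Require Import structures.
From mathcomp Require Import all_boot all_order all_algebra.
From mathcomp Require Import mxtens ring.
Import Order.TTheory GRing.Theory Num.Theory.
Local Open Scope ring_scope.

Lemma adjE (C : numClosedFieldType) m n (A : 'M[C]_(m,n)) i j : adj A i j = (A j i)^*.
Proof. by rewrite /adj !mxE. Qed.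
Lemma adjK (C : numClosedFieldType) m n (A : 'M[C]_(m,n)) : adj (adj A) = A.
Proof. by apply/matrixP=> i j; rewrite !adjE conjCK. Qed.
Lemma adjM (C : numClosedFieldType) m n p (A : 'M[C]_(m,n)) (B : 'M[C]_(n,p)) :
  adj (A *m B) = adj B *m adj A.
Proof.
apply/matrixP=> i j; rewrite adjE !mxE rmorph_sum; apply: eq_bigr => k _.
by rewrite rmorphM /= !adjE mulrC.
Qed.
Lemma adjD (C : numClosedFieldType) m n (A B : 'M[C]_(m,n)) : adj (A + B) = adj A + adj B.
Proof. by apply/matrixP=> i j; rewrite !mxE rmorphD. Qed.
Lemma adjN (C : numClosedFieldType) m n (A : 'M[C]_(m,n)) : adj (- A) = - adj A.
Proof. by apply/matrixP=> i j; rewrite !mxE rmorphN. Qed.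
Lemma adjZ (C : numClosedFieldType) m n a (A : 'M[C]_(m,n)) : adj (a *: A) = a^* *: adj A.
Proof. by apply/matrixP=> i j; rewrite !mxE rmorphM. Qed.
Lemma adj1 (C : numClosedFieldType) n : adj (1%:M : 'M[C]_n) = 1%:M.
Proof. by apply/matrixP=> i j; rewrite adjE !mxE eq_sym conjC_nat. Qed.

Lemma mx_ext (C : numClosedFieldType) m n (A B : 'M[C]_(m,n)) :
  (forall w : 'cV[C]_n, A *m w = B *m w) -> A = B.
Proof.
move=> H; apply/matrixP=> i j.
by have := congr1 (fun M : 'cV[C]_m => M i 0) (H (delta_mx j 0)); rewrite -!colE !mxE.
Qed.

Lemma proj_psi (C : numClosedFieldType) {n} (M1 M2 : 'M[C]_n) (psi : 'cV[C]_n) :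
  qhermitian M1 -> qunitary M1 -> qhermitian M2 -> qunitary M2 ->
  M1 *m M2 = M2 *m M1 ->
  adj psi *m psi = 1%:M ->
  (forall v : 'cV[C]_n,
      (M1 *m v = v /\ M2 *m v = v) <-> exists a : C, v = a *: psi) ->
  (1%:M + M1) *m (1%:M + M2) = 4%:R *: (psi *m adj psi).
Proof.
move=> h1 [u1 _] h2 [u2 _] cm npsi E.
rewrite h1 in u1; rewrite h2 in u2.
set Q := (1%:M + M1) *m (1%:M + M2).
have H1 : M1 *m (1%:M + M1) = 1%:M + M1 by rewrite mulmxDr mulmx1 u1 addrC.
have H2 : M2 *m (1%:M + M2) = 1%:M + M2 by rewrite mulmxDr mulmx1 u2 addrC.
have C2 : M2 *m (1%:M + M1) = (1%:M + M1) *m M2.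
  by rewrite mulmxDr mulmxDl mulmx1 mul1mx cm.
have Q1 : M1 *m Q = Q by rewrite /Q mulmxA H1.
have Q2 : M2 *m Q = Q by rewrite /Q mulmxA C2 -mulmxA H2.
have QE : Q = psi *m adj psi *m Q.
  apply: mx_ext => w.
  have [a ha] : exists a, Q *m w = a *: psi.
    by apply/E; split; rewrite mulmxA ?Q1 ?Q2.
  by rewrite -(mulmxA _ Q w) ha -!mulmxA -scalemxAr npsi scalemx1 mul_mx_scalar.
have Qh : adj Q = Q.
  rewrite /Q adjM !adjD adj1 h1 h2 [LHS]mulmxDl mul1mx C2.
  by rewrite -[X in X + _]mulmx1 -mulmxDr.
have [m1 m2] : M1 *m psi = psi /\ M2 *m psi = psi.
  by apply/E; exists 1; rewrite scale1r.
have e1 : (1%:M + M1) *m psi = 2%:R *: psi by rewrite mulmxDl mul1mx m1 scaler_nat mulr2n.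
have e2 : (1%:M + M2) *m psi = 2%:R *: psi by rewrite mulmxDl mul1mx m2 scaler_nat mulr2n.
have Qpsi : Q *m psi = 4%:R *: psi.
  by rewrite /Q -mulmxA e2 -scalemxAr e1 scalerA -natrM.
clearbody Q; by rewrite -Qh QE !adjM adjK Qh mulmxA Qpsi -scalemxAl.
Qed.
Lemma rank1 (C : numClosedFieldType) (phi : 'cV[C]_2) (M : 'M[C]_2) :
  phi *m adj phi = 2^-1 *: (1%:M + M) -> \tr M = 0 ->
  qhermitian M /\ qunitary M /\ M *m phi = phi.
Proof.
move=> H tM.
have n2 : (2%:R : C) != 0 by rewrite pnatr_eq0.
set P := phi *m adj phi in H *.
have ME : M = 2%:R *: P - 1%:M.
  by rewrite H scalerA divff // scale1r addrC addKr.
have n1 : adj phi *m phi = 1%:M.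
  rewrite [LHS]mx11_scalar; congr (_%:M).
  have : \tr (adj phi *m phi) = \tr P by rewrite mxtrace_mulC.
  rewrite /mxtrace big_ord1 => ->.
  rewrite -/(mxtrace P) H mxtraceZ mxtraceD tM addr0 mxtrace1 mulVf //.
have PP : P *m P = P by rewrite /P mulmxA -(mulmxA phi) n1 mulmx1.
have Ph : adj P = P by rewrite /P adjM adjK.
have Mh : adj M = M by rewrite ME adjD adjN adjZ adj1 Ph conjC_nat.
have MM : M *m M = 1%:M.
  rewrite {1}ME mulmxBl mul1mx -scalemxAl ME mulmxBr mulmx1 -scalemxAr PP.
  by rewrite !scaler_nat !mulr2n addrK opprB addrC subrK.
split => //; split; first by rewrite /qunitary Mh MM.
by rewrite ME mulmxBl mul1mx -scalemxAl /P -mulmxA n1 mulmx1 scaler_nat mulr2n addrK.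
Qed.
Lemma sum22 (C : numClosedFieldType) (F : 'I_(2*2) -> C) :
  \sum_(x < 2*2) F x = \sum_(i < 2) \sum_(k < 2) F (mxtens_index (i, k)).
Proof.
rewrite (reindex (@mxtens_index 2 2)); last first.
  by exists (@mxtens_unindex 2 2) => x _; [apply: mxtens_indexK | apply: mxtens_unindexK].
rewrite pair_big /=; apply: eq_bigr => -[i k] _ //.
Qed.

Lemma idx_eq (i k i' k' : 'I_2) :
  (mxtens_index (i, k) == mxtens_index (i', k')) = (i == i') && (k == k').
Proof. by rewrite (inj_eq (can_inj (@mxtens_indexK 2 2))) xpair_eqE. Qed.

Lemma pe_entry (C : numClosedFieldType) (N : nat -> 'M[C]_2) (i k k' : 'I_2) :
  pauli_expand N (mxtens_index (i, k)) (mxtens_index (i, k'))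
  = N 0%N k k' + pauliZ C i i * N 3%N k k'.
Proof.
rewrite /pauli_expand !mxE !mxtens_indexK /= eqxx mul1r.
by case: i => -[|[|]] //= _; rewrite !mul0r !addr0.
Qed.

Lemma Z00 (C : numClosedFieldType) : pauliZ C 0 0 = 1.
Proof. by rewrite mxE. Qed.
Lemma Z11 (C : numClosedFieldType) : pauliZ C 1 1 = -1.
Proof. by rewrite mxE. Qed.

Lemma mxDE (C : numClosedFieldType) m n (A B : 'M[C]_(m,n)) i j : (A + B) i j = A i j + B i j.
Proof. by rewrite mxE. Qed.
Lemma mxZE (C : numClosedFieldType) m n a (A : 'M[C]_(m,n)) i j : (a *: A) i j = a * A i j.
Proof. by rewrite mxE. Qed.

Lemma psi_entry (C : numClosedFieldType)
  (M1 M2 : 'M[C]_(2 * 2)) (psi : 'cV[C]_(2 * 2))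
  (N1 N2 N3 : nat -> 'M[C]_2) :
  qhermitian M1 -> qunitary M1 -> qhermitian M2 -> qunitary M2 ->
  M1 *m M2 = M2 *m M1 ->
  adj psi *m psi = 1%:M ->
  (forall v : 'cV[C]_(2 * 2),
      (M1 *m v = v /\ M2 *m v = v) <-> exists a : C, v = a *: psi) ->
  M1 = pauli_expand N1 -> M2 = pauli_expand N2 -> M1 *m M2 = pauli_expand N3 ->
  forall i k k' : 'I_2,
  4%:R * (psi (mxtens_index (i, k)) 0 * (psi (mxtens_index (i, k')) 0)^*)
  = (k == k')%:R + (N1 0%N + N2 0%N + N3 0%N) k k'
     + pauliZ C i i * (N1 3%N + N2 3%N + N3 3%N) k k'.
Proof.
move=> h1 u1 h2 u2 cm npsi E e1 e2 e3 i k k'.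
have := @proj_psi C _ _ _ _ h1 u1 h2 u2 cm npsi E.
rewrite mulmxDl mul1mx mulmxDr mulmx1 e3 {1}e2 e1.
move: (@pe_entry C N1 i k k') (@pe_entry C N2 i k k') (@pe_entry C N3 i k k').
move: (pauli_expand N1) (pauli_expand N2) (pauli_expand N3) => P1 P2 P3 p1 p2 p3.
move=> /matrixP/(_ (mxtens_index (i, k)) (mxtens_index (i, k'))).
rewrite !mxDE p1 p2 p3 mxZE !mxE big_ord1 adjE idx_eq eqxx /= => <-.
ring.
Qed.

Lemma trS0 (C : numClosedFieldType) (psi : 'cV[C]_(2 * 2)) (S0 S3 : 'M[C]_2) :
  adj psi *m psi = 1%:M ->
  (forall i k k' : 'I_2,
    4%:R * (psi (mxtens_index (i, k)) 0 * (psi (mxtens_index (i, k')) 0)^*)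
    = (k == k')%:R + S0 k k' + pauliZ C i i * S3 k k') ->
  \tr S0 = 0.
Proof.
move=> npsi H.
have := congr1 (fun A : 'M[C]_1 => 4%:R * A 0 0) npsi.
rewrite !mxE sum22 mulr_sumr.
under eq_bigr => i _ do (rewrite mulr_sumr; under eq_bigr => k _ do rewrite adjE (mulrC (_^*)) H).
rewrite /mxtrace !big_ord_recl !big_ord0 !mxE /=.
set a := S0 ord0 ord0; set b := S0 _ _; move=> h.
have : 2%:R * (a + (b + 0)) = 0.
  rewrite -[RHS](subrr (4%:R * 1 : C)); rewrite -{1}h; ring.
by move/eqP; rewrite mulf_eq0 pnatr_eq0 /= => /eqP.
Qed.

Lemma proj_ket (C : numClosedFieldType) (psi : 'cV[C]_(2 * 2)) (i : 'I_2) :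
  ((delta_mx i 0 *m adj (delta_mx i 0 : 'cV[C]_2)) *t (1%:M : 'M[C]_2)) *m psi
  = (delta_mx i 0 : 'cV[C]_2) *t (\col_k psi (mxtens_index (i, k)) 0).
Proof.
apply/matrixP => x y; case: (mxtens_indexP x) => a k.
rewrite [y]ord1 !mxE sum22 !mxtens_indexK /=.
rewrite (bigD1 i) //= [X in _ + X]big1 ?addr0; last first.
  move=> b /negPf bi; apply: big1 => l _.
  by rewrite !mxE !mxtens_indexK /= big_ord1 !mxE bi /= conjC0 !mulr0 !mul0r.
rewrite (bigD1 k) //= [X in _ + X]big1 ?addr0; last first.
  move=> l /negPf kl.
  by rewrite !mxE !mxtens_indexK /= big_ord1 !mxE (eq_sym k l) kl mulr0 mul0r.
rewrite !mxE !mxtens_indexK /= big_ord1 !mxE !eqxx.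
have -> : forall z : 'I_1, (z == 0) = true by move=> z; rewrite [z]ord1.
by rewrite /= !andbT conjC1 mulr1 mulr1.
Qed.

Lemma tensZr (C : numClosedFieldType) m n p q a (A : 'M[C]_(m,n)) (B : 'M[C]_(p,q)) :
  a *: (A *t B) = A *t (a *: B).
Proof.
apply/matrixP => x y; case: (mxtens_indexP x) => i k; case: (mxtens_indexP y) => j l.
by rewrite mxZE !tensmxE mxZE mulrCA.
Qed.

Lemma half (C : numClosedFieldType) (psi : 'cV[C]_(2 * 2)) (i : 'I_2) (T : 'M[C]_2) (p : C) :
  0 < p ->
  (forall k k' : 'I_2, 4%:R * (psi (mxtens_index (i, k)) 0 * (psi (mxtens_index (i, k')) 0)^*)
     = (k == k')%:R + T k k') ->
  \tr T = 2%:R * (2%:R * p - 1) ->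
  let M := (2 * p)^-1 *: traceless T in
  exists phi : 'cV[C]_2,
    (sqrtC p)^-1 *: (((delta_mx i 0 *m adj (delta_mx i 0 : 'cV[C]_2)) *t (1%:M : 'M[C]_2)) *m psi)
      = (delta_mx i 0 : 'cV[C]_2) *t phi
    /\ phi *m adj phi = 2^-1 *: (1%:M + M)
    /\ qhermitian M /\ qunitary M /\ M *m phi = phi.
Proof.
move=> p0 Hk HT M.
set s := sqrtC p.
have s0 : 0 < s by rewrite sqrtC_gt0.
have sc : s^* = s by rewrite conj_Creal // ger0_real // ltW.
have ss : s * s = p by rewrite -expr2 sqrtCK.
have pn0 : p != 0 by rewrite gt_eqF.
have sn0 : s != 0 by rewrite gt_eqF.
have sc' : (s^-1)^* = s^-1 by rewrite conj_Creal // realV ger0_real // ltW.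
have cM : forall x y : C, (x * y)^* = x^* * y^* by move=> x y; rewrite rmorphM.
exists (s^-1 *: \col_k psi (mxtens_index (i, k)) 0).
have E1 : (s^-1 *: \col_k psi (mxtens_index (i, k)) 0) *m adj (s^-1 *: \col_k psi (mxtens_index (i, k)) 0)
   = 2^-1 *: (1%:M + M).
  apply/matrixP => k k'.
  rewrite !mxE big_ord1 adjE !mxE cM sc' mulrACA.
  have HX := Hk k k'.
  have -> : psi (mxtens_index (i, k)) 0 * (psi (mxtens_index (i, k')) 0)^*
     = 4%:R^-1 * ((k == k')%:R + T k k').
    by rewrite -HX !mulrA mulVf ?mul1r // pnatr_eq0.
  rewrite HT -invfM ss; field; rewrite ?pn0 ?pnatr_eq0 //.
split.
  by rewrite proj_ket -tensZr.
split => //.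
apply: rank1 => //.
by rewrite /M mxtraceZ /traceless raddfB /= mxtraceZ mxtrace1 divfK ?subrr ?mulr0 // pnatr_eq0.
Qed.

Lemma tl3 (C : numClosedFieldType) (A B D : 'M[C]_2) :
  traceless A + traceless B + traceless D = traceless (A + B + D).
Proof.
rewrite /traceless !mxtraceD; apply/matrixP => i j; rewrite !mxE; ring.
Qed.

Theorem mainTheorem17 (C : numClosedFieldType)
  (M1 M2 : 'M[C]_(2 * 2)) (psi : 'cV[C]_(2 * 2))
  (N1 N2 N3 : nat -> 'M[C]_2) :
  qhermitian M1 -> qunitary M1 -> qhermitian M2 -> qunitary M2 ->
  M1 *m M2 = M2 *m M1 ->
  adj psi *m psi = 1%:M ->
  (forall v : 'cV[C]_(2 * 2),
      (M1 *m v = v /\ M2 *m v = v) <-> exists a : C, v = a *: psi) ->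
  M1 = pauli_expand N1 -> M2 = pauli_expand N2 -> M1 *m M2 = pauli_expand N3 ->
  let c1 := \tr (N1 3%N) / 2 in
  let c2 := \tr (N2 3%N) / 2 in
  let c3 := \tr (N3 3%N) / 2 in
  let pp := (1 + (c1 + c2 + c3)) / 2 in
  let pm := (1 - (c1 + c2 + c3)) / 2 in
  let Mp := (2 * pp)^-1 *: (traceless (N1 0%N + N1 3%N)
              + traceless (N2 0%N + N2 3%N) + traceless (N3 0%N + N3 3%N)) in
  let Mm := (2 * pm)^-1 *: (traceless (N1 0%N - N1 3%N)
              + traceless (N2 0%N - N2 3%N) + traceless (N3 0%N - N3 3%N)) in
  (0 < pp ->
     exists phi : 'cV[C]_2,
       (sqrtC pp)^-1 *: (proj0 C *m psi) = ket0 C *t phi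
       /\ phi *m adj phi = 2^-1 *: (1%:M + Mp)
       /\ qhermitian Mp /\ qunitary Mp /\ Mp *m phi = phi)
  /\
  (0 < pm ->
     exists phi : 'cV[C]_2,
       (sqrtC pm)^-1 *: (proj1 C *m psi) = ket1 C *t phi
       /\ phi *m adj phi = 2^-1 *: (1%:M + Mm)
       /\ qhermitian Mm /\ qunitary Mm /\ Mm *m phi = phi).
Proof.
move=> h1 u1 h2 u2 cm npsi E e1 e2 e3 c1 c2 c3 pp pm Mp Mm.
have Hent := @psi_entry C _ _ _ _ _ _ h1 u1 h2 u2 cm npsi E e1 e2 e3.
have t0 := @trS0 C _ _ _ npsi Hent.
rewrite !mxtraceD in t0.
move/eqP: t0; rewrite addrC addr_eq0 => /eqP t0.
split => hp.
- rewrite /Mp tl3.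
  apply: (@half C psi 0 _ pp hp).
    by move=> k k'; rewrite Hent Z00 !mxDE; ring.
  by rewrite !mxtraceD t0 /pp /c1 /c2 /c3; field.
- rewrite /Mm tl3.
  apply: (@half C psi 1 _ pm hp).
    by move=> k k'; rewrite Hent Z11 !mxDE !mxE; ring.
  by rewrite !mxtraceD !raddfN /= t0 /pm /c1 /c2 /c3; field.
Qed.
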